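(* Let $S$ be a numerical semigroup, let $b\in\mathrm{IBetti}(S)$ and let $s\in S$. Write $s=\omega_s+q_sb$ with $\omega_s\in\mathrm{Ap}(S;b)$ and $q_s\in\mathbb N$. Then $$|\mathrm B(s;\{b\})|=\begin{cases}\binom{\mathrm i(b)+q_s-1}{q_s}&\text{if }\mathfrak d(\omega_s)=1,\\ 0&\text{otherwise.}\end{cases}$$
   Context: A numerical semigroup $S$ is a submonoid of $(\mathbb N,+)$ with finite complement, minimally generated by $\{n_1,\dots,n_e\}$. For $m\in S$, the Apéry set is $\mathrm{Ap}(S;m)=\{s\in S: s-m\notin S\}$; every $s\in S$ is uniquely $s=\omega+qm$ with $\omega\in\mathrm{Ap}(S;m)$, $q\in\mathbb N$. Let $\varphi:\mathbb N^e\to S$, $\varphi(a)=\sum_ia_in_i$; $\mathrm Z(s)=\varphi^{-1}(s)$, $\mathfrak d(s)=|\mathrm Z(s)|$. $\nabla_s$ is the graph on $\mathrm Z(s)$ with distinct $x,y$ adjacent iff $x\cdot y\ne0$; $s$ is a Betti element if $\nabla_s$ is disconnected. A factorization $z\in\mathrm Z(s)$ is isolated if $z\cdot x=0$ for all $x\in\mathrm Z(s)\setminus\{z\}$; $\mathrm I(s)$ is the set of isolated factorizations of $s$, $\mathrm i(s)=|\mathrm I(s)|$, and $\mathrm I(\Lambda)=\bigcup_{t\in\Lambda}\mathrm I(t)$ for $\Lambda\subseteq S$. $\mathrm I_s(S)$ is the set of $z\in\mathbb N^e$ such that $\varphi(z)$ has exactly one factorization. $\mathrm{IBetti}(S)$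 is the set of Betti elements $b$ with $\mathrm I(b)\neq\emptyset$. For $\Lambda\subseteq S$, $\mathrm B(s;\Lambda)=\{w+x_1+\cdots+x_l\in\mathrm Z(s): w\in\mathrm I_s(S),\ l\ge0,\ x_1,\dots,x_l\in\mathrm I(\Lambda)\}$. *)

(* Defs.v *)
From mathcomp Require Import all_boot.
Set Implicit Arguments. Unset Strict Implicit. Unset Printing Implicit Defensive.

(* A numerical semigroup S minimally generated by n_0,...,n_{e-1},
   factorizations are elements of N^e encoded as {ffun 'I_e -> nat}. *)
Section NS.
Variables (e : nat) (n : 'I_e -> nat).

Definition factn := {ffun 'I_e -> nat}.

Definition phi (z : factn) : nat := \sum_(i < e) z i * n i.

Definition inS (s : nat) : Prop := exists z : factn, phi z = s.

Definition is_min_numsg : Prop :=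
  [/\ (forall i, 0 < n i),
      (exists F, forall x, F <= x -> inS x) &
      (forall i, ~ exists z : factn, z i = 0 /\ phi z = n i)].

Definition inZ (s : nat) (z : factn) : Prop := phi z = s.

Definition dotf (x y : factn) : nat := \sum_(i < e) x i * y i.

Definition has_card (P : factn -> Prop) (k : nat) : Prop :=
  exists l : seq factn, [/\ uniq l, (forall z, P z <-> z \in l) & size l = k].

(* Apery set Ap(S;m) = {s in S : s - m notin S} (s - m an integer) *)
Definition inApery (m s : nat) : Prop := inS s /\ ~ (m <= s /\ inS (s - m)).

Definition adjf (x y : factn) : bool := (x != y) && (dotf x y != 0).

Definition nabla_connected (s : nat) : Prop :=
  forall x y, inZ s x -> inZ s y ->
    exists p : seq factn, (forall u, u \in p -> inZ s u) /\
                          path adjf x p /\ last x p = y.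

Definition is_Betti (s : nat) : Prop := inS s /\ ~ nabla_connected s.

Definition isolated (s : nat) (z : factn) : Prop :=
  inZ s z /\ forall x, inZ s x -> x <> z -> dotf z x = 0.

Definition isolatedL (Lam : nat -> Prop) (z : factn) : Prop :=
  exists t, Lam t /\ isolated t z.

Definition in_Is (z : factn) : Prop := has_card (inZ (phi z)) 1.

Definition is_IBetti (b : nat) : Prop := is_Betti b /\ exists z, isolated b z.

Definition addf (x y : factn) : factn := [ffun i => x i + y i].
Definition zerof : factn := [ffun _ => 0].
Definition sumf (xs : seq factn) : factn := foldr addf zerof xs.

Definition inB (s : nat) (Lam : nat -> Prop) (z : factn) : Prop :=
  inZ s z /\ exists w (xs : seq factn),
    in_Is w /\ (forall x, x \in xs -> isolatedL Lam x) /\ z = addf w (sumf xs).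

End NS.

(* Main.v *)
Require Import Defs.
From mathcomp Require Import all_boot.
From mathcomp Require Import zify.
Set Implicit Arguments. Unset Strict Implicit. Unset Printing Implicit Defensive.

Lemma addfE e (x y : factn e) i : addf x y i = x i + y i.
Proof. by rewrite /addf ffunE. Qed.

Lemma zerofE e i : (zerof e) i = 0.
Proof. by rewrite /zerof ffunE. Qed.

Lemma phi_add e (n : 'I_e -> nat) x y : phi n (addf x y) = phi n x + phi n y.
Proof.
rewrite /phi -big_split /=; apply: eq_bigr => i _; by rewrite addfE mulnDl.
Qed.

Lemma phi_zero e (n : 'I_e -> nat) : phi n (zerof e) = 0.
Proof. rewrite /phi big1 // => i _; by rewrite zerofE. Qed.

Lemma phi_sumf e (n : 'I_e -> nat) b (xs : seq (factn e)) :
  (forall x, x \in xs -> phi n x = b) -> phi n (sumf xs) = size xs * b.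
Proof.
elim: xs => [|x xs IH] H /=; first by rewrite phi_zero.
rewrite phi_add H ?mem_head // IH ?mulSn // => y Hy; apply: H; by rewrite inE Hy orbT.
Qed.

Lemma addf_inj e (x y y' : factn e) : addf x y = addf x y' -> y = y'.
Proof.
move=> H; apply/ffunP => i; have := congr1 (fun f : factn e => f i) H => /=.
rewrite !addfE; lia.
Qed.

Lemma addfC e (x y : factn e) : addf x y = addf y x.
Proof. apply/ffunP => i; rewrite !addfE; lia. Qed.

Lemma addfCA e (x y z : factn e) : addf x (addf y z) = addf y (addf x z).
Proof. apply/ffunP => i; rewrite !addfE; lia. Qed.

Lemma inS_add e (n : 'I_e -> nat) a c : inS n a -> inS n c -> inS n (a + c).
Proof. move=> [x <-] [y <-]; exists (addf x y); by rewrite phi_add. Qed.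

Lemma inS0 e (n : 'I_e -> nat) : inS n 0.
Proof. exists (zerof e); exact: phi_zero. Qed.

Lemma inS_mul e (n : 'I_e -> nat) k b : inS n b -> inS n (k * b).
Proof. move=> Hb; elim: k => [|k IH]; first exact: inS0. rewrite mulSn; exact: inS_add. Qed.

Lemma sumf_rem e (x : factn e) xs : x \in xs -> sumf xs = addf x (sumf (rem x xs)).
Proof.
elim: xs => [|y ys IH] //=; rewrite inE; case: eqVneq => [->|ne] //= Hx.
by rewrite IH // addfCA.
Qed.

Fixpoint sums e (l : seq (factn e)) (q : nat) {struct l} : seq (factn e) :=
  match l with
  | [::] => if q is 0 then [:: zerof e] else [::]
  | x :: l' => (fix g q := match q with
                  | 0 => [:: zerof e]
                  | q'.+1 => map (addf x) (g q') ++ sums l' q'.+1 end) q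
  end.

Lemma sums_cons0 e (x : factn e) l : sums (x :: l) 0 = [:: zerof e].
Proof. by []. Qed.
Lemma sums_consS e (x : factn e) l q :
  sums (x :: l) q.+1 = map (addf x) (sums (x :: l) q) ++ sums l q.+1.
Proof. by []. Qed.

Lemma sums_size e (l : seq (factn e)) q : size (sums l q) = 'C(size l + q - 1, q).
Proof.
elim: l q => [|x l IH] q.
  case: q => [|q] //=; by rewrite bin_small // subn1 /=.
elim: q => [|q IHq]; first by rewrite sums_cons0 bin0.
rewrite sums_consS size_cat size_map IHq IH /=.
have -> : (size l).+1 + q.+1 - 1 = (size l + q).+1 by lia.
have -> : (size l).+1 + q - 1 = size l + q by lia.
have -> : size l + q.+1 - 1 = size l + q by lia.
by rewrite binS addnC.
Qed.

Lemma sums_mem e (l : seq (factn e)) q z :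
  z \in sums l q <-> exists xs, [/\ size xs = q, {subset xs <= l} & z = sumf xs].
Proof.
elim: l q z => [|x l IH] q z.
  split.
    case: q => [|q] //=; rewrite inE => /eqP ->; by exists [::].
  case=> [[|y xs]] [<- Hs ->] //=; first by rewrite inE.
  by have := Hs y (mem_head _ _).
elim: q z => [|q IHq] z.
  rewrite sums_cons0 inE; split; first by move/eqP->; exists [::].
  by case=> [[|y xs]] [] //= _ _ ->.
rewrite sums_consS mem_cat; split.
  case/orP.
    case/mapP => y /IHq [xs [Hsz Hs ->]] ->.
    exists (x :: xs); split => //=; first by rewrite Hsz.
    move=> u; rewrite inE => /orP [/eqP->|/Hs //]; exact: mem_head.
  move/IH => [xs [Hsz Hs ->]]; exists xs; split => // u /Hs; rewrite inE => ->; by rewrite orbT.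
case=> xs [Hsz Hs ->].
case Hx: (x \in xs).
  apply/orP; left; rewrite (sumf_rem Hx); apply: map_f; apply/IHq.
  exists (rem x xs); split => //.
    by rewrite size_rem // Hsz.
  by move=> u /mem_rem /Hs.
apply/orP; right; apply/IH; exists xs; split => // u Hu.
have := Hs u Hu; rewrite inE => /orP [/eqP Eu|//]; by rewrite -Eu Hu in Hx.
Qed.

Lemma sums_coord0 e (l : seq (factn e)) q z i :
  (forall y, y \in l -> y i = 0) -> z \in sums l q -> z i = 0.
Proof.
move=> H /sums_mem [xs [_ Hs ->]].
elim: xs Hs => [|y xs IHx] Hs /=; first by rewrite zerofE.
rewrite addfE H ?Hs ?mem_head // IHx // => u Hu; apply: Hs; by rewrite inE Hu orbT.
Qed.

Lemma dotf0 e (x y : factn e) i : dotf x y = 0 -> x i * y i = 0.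
Proof. rewrite /dotf (bigD1 i) //=; lia. Qed.

Lemma sums_uniq e (l : seq (factn e)) q :
  uniq l -> (forall x y, x \in l -> y \in l -> x != y -> dotf x y = 0) ->
  (forall x, x \in l -> x != zerof e) -> uniq (sums l q).
Proof.
elim: l q => [|x l IH] q Hu Hd Hz.
  by case: q.
have Hu' := Hu; move: Hu' => /= /andP [Hxl Hul].
have Hd' : forall x y, x \in l -> y \in l -> x != y -> dotf x y = 0.
  move=> u v Hu1 Hv1; apply: Hd; by rewrite inE ?Hu1 ?Hv1 orbT.
have Hz' : forall y, y \in l -> y != zerof e.
  move=> u Hu1; apply: Hz; by rewrite inE Hu1 orbT.
have [i Hi] : exists i, 0 < x i.
  case: (pickP (fun i => 0 < x i)) => [i Hi|H]; first by exists i.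
  have := Hz x (mem_head _ _); case/eqP; apply/ffunP => i.
  rewrite zerofE; have := H i; simpl; lia.
change (uniq (sums (x :: l) q)); elim: q => [|q IHq]; first by [].
rewrite sums_consS cat_uniq map_inj_uniq ?IHq; last exact: addf_inj.
rewrite IH // andbT; apply/hasPn => z Hz1; apply/mapP => [[y _ Ez]].
have Hzi : z i = 0.
  apply: (sums_coord0 (l := l) (q := q.+1)) => // u Hu1.
  have Hxu : x != u by apply: contraNneq Hxl => ->.
  have Hu2 : u \in x :: l by rewrite inE Hu1 orbT.
  have := dotf0 i (Hd x u (mem_head _ _) Hu2 Hxu) => /eqP; rewrite muln_eq0 => /orP [/eqP H0|/eqP //]; lia.
move: Hzi; rewrite Ez addfE; lia.
Qed.

Lemma conn_of_sub e (n : 'I_e -> nat) b :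
  (forall u v, inZ n b u -> inZ n b v -> u = v) -> nabla_connected n b.
Proof. move=> H u v Hu Hv; exists [::]; split => //=; split => //; exact: H. Qed.

Lemma Is_apery e (n : 'I_e -> nat) b w' :
  is_Betti n b -> in_Is n w' -> ~ (b <= phi n w' /\ inS n (phi n w' - b)).
Proof.
move=> [_ Hnc] [[|a [|a' l]] [_ Hm Hs]] // [Hle [y Hy]].
apply: Hnc; apply: conn_of_sub => u v Hu Hv.
have Hin : forall t, inZ n b t -> addf y t = a.
  move=> t Ht; have : addf y t \in [:: a].
    apply/Hm; rewrite /inZ phi_add Hy Ht; lia.
  by rewrite inE => /eqP.
apply: (@addf_inj _ y); by rewrite !Hin.
Qed.

Lemma b_pos e (n : 'I_e -> nat) b :
  is_min_numsg n -> is_Betti n b -> 0 < b.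
Proof.
move=> [Hpos _ _] [_ Hnc]; case: b Hnc => // Hnc; exfalso; apply: Hnc.
apply: conn_of_sub.
have H0 : forall u, inZ n 0 u -> u = zerof e.
  move=> u Hu; apply/ffunP => i; rewrite zerofE.
  move: Hu; rewrite /inZ /phi (bigD1 i) //= => Hu.
  have := Hpos i; nia.
by move=> u v /H0 -> /H0 ->.
Qed.

Lemma apery_uniq e (n : 'I_e -> nat) b a w l q :
  inS n b -> inApery n b a -> inApery n b w -> a + l * b = w + q * b -> a = w /\ l = q.
Proof.
move=> Hb [Ha HaA] [Hw HwA] E.
case: (ltngtP l q) => Hlq.
- exfalso; apply: HaA; split; first nia.
  have -> : a - b = w + (q - l - 1) * b by nia.
  apply: inS_add => //; exact: inS_mul.
- exfalso; apply: HwA; split; first nia.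
  have -> : w - b = a + (l - q - 1) * b by nia.
  apply: inS_add => //; exact: inS_mul.
- subst l; split => //; lia.
Qed.

Theorem corollary5p6 (e : nat) (n : 'I_e -> nat) (b s : nat) :
  is_min_numsg n -> is_IBetti n b -> inS n s ->
  forall (ib : nat) (w q : nat),
    has_card (isolated n b) ib ->
    inApery n b w -> s = w + q * b ->
    (has_card (inZ n w) 1 ->
       has_card (inB n s (fun t => t = b)) 'C(ib + q - 1, q)) /\
    (~ has_card (inZ n w) 1 ->
       has_card (inB n s (fun t => t = b)) 0).
Proof.
move=> Hmin [Hbet [x0 Hx0]] HsS ib w q [I [HIu HIm HIs]] Hw Es.
have HbS : inS n b by case: Hbet.
have bpos := b_pos Hmin Hbet.
have KB : forall z, inB n s (fun t => t = b) z ->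
    exists w' xs, [/\ in_Is n w', phi n w' = w, size xs = q,
       {subset xs <= I} & z = addf w' (sumf xs)].
  move=> z [Hz [w' [xs [Hw' [Hxs Ez]]]]].
  have Hxs' : {subset xs <= I}.
    move=> x /Hxs [t [-> Ht]]; exact/HIm.
  have Hph : phi n w' + size xs * b = w + q * b.
    rewrite -Es -Hz Ez phi_add (phi_sumf (b := b)) //.
    by move=> x /Hxs [t [-> [Ht _]]].
  have HwA : inApery n b (phi n w').
    split; first by exists w'.
    exact: Is_apery Hbet Hw'.
  have [E1 E2] := apery_uniq HbS HwA Hw Hph.
  by exists w', xs; split.
split.
- move=> [[|w0 [|w1 l]] [_ Hw0 Hs1]] //.
  have Hw0w : inZ n w w0 by apply/Hw0; exact: mem_head.
  exists (map (addf w0) (sums I q)); split.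
  + rewrite map_inj_uniq; last exact: addf_inj.
    apply: sums_uniq => //.
      move=> x y /HIm Hx /HIm Hy Hxy; case: Hx => _ Hx; apply: Hx.
        by case: Hy.
      by apply/eqP; rewrite eq_sym.
    move=> x /HIm [Hx _]; apply/eqP => Ex; move: Hx; rewrite Ex /inZ phi_zero; lia.
  + move=> z; split.
      move=> /KB [w' [xs [Hw' Hpw Hsz Hsub ->]]].
      have : w' \in [:: w0] by apply/Hw0; rewrite /inZ Hpw.
      rewrite inE => /eqP ->; apply: map_f; apply/sums_mem; by exists xs.
    case/mapP => y /sums_mem [xs [Hsz Hsub ->]] ->.
    split.
      rewrite /inZ phi_add (phi_sumf (b := b)) ?Hw0w ?Hsz ?Es //.
      by move=> x /Hsub /HIm [].
    exists w0, xs; split => //.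
      by rewrite /in_Is Hw0w; exists [:: w0]; split.
    split => //; move=> x /Hsub /HIm Hx; by exists b.
  + by rewrite size_map sums_size HIs.
- move=> Hnw; exists [::]; split => // z; split => //.
  move=> /KB [w' [xs [Hw' Hpw _ _ _]]]; exfalso; apply: Hnw; by rewrite -Hpw.
Qed.
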